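(* Let $\rho:\gamma_0\to\gamma_1\to\cdots\to\gamma_r$ be a lossy execution of a broadcast protocol $P=(Q,I,M,\Delta)$ with $\gamma_r=(V,E,L)$. For every $q\in L(\gamma_r)$ and every node $v^q\in V$ with $L(v^q)=q$, there exist $s\in\mathbb{N}$ and a lossy execution $\rho':\gamma'_0\to\gamma'_1\to\cdots\to\gamma'_s$ with $\gamma'_s=(V',E',L')$ such that $|V'|=|V|+1$, and there is an injection $\iota:V\to V'$ with $L'(\iota(v))=L(v)$ for every $v\in V$, and, for the extra node $v_{new}\in V'\setminus\iota(V)$: $L'(v_{new})=q$; for every $v\in V$, $v_{new}$ and $\iota(v)$ are adjacent in $E'$ if and only if $v^q$ and $v$ are adjacent in $E$; the number of broadcasts (lost or successful) performed by $v_{new}$ along $\rho'$ equals the number of broadcasts performed by $v^q$ along $\rho$; and $v_{new}$ performs no successful broadcast along $\rho'$.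
   Context: A broadcast protocol is a tuple $P=(Q,I,M,\Delta)$ where $Q$ is a finite set of states, $I\subseteq Q$ initial states, $M$ a finite message alphabet and $\Delta\subseteq Q\times\{!!m,\ ??m \mid m\in M\}\times Q$ ($!!m$ = broadcast, $??m$ = reception). Protocols are complete for receptions: for every $q$, $m$ there is $q'$ with $(q,??m,q')\in\Delta$. A configuration is a finite undirected graph $\gamma=(V,E,L)$, $E$ symmetric irreflexive, $L:V\to Q$; $L(\gamma)=L(V)$; $\gamma$ is initial if $L(V)\subseteq I$. A lossy step goes from $\gamma=(V,E,L)$ to $\gamma'=(V,E,L')$ (same nodes and edges) if there exist a node $v$ (which broadcasts in this step) and $m\in M$ with $(L(v),!!m,L'(v))\in\Delta$ and either (a) $L'(v')=L(v')$ for all $v'\neq v$ (the broadcast is lost), or (b) for every $v'\neq v$: if $v'$ is a neighbour of $v$ then $(L(v'),??m,L'(v'))\in\Delta$, otherwise $L'(v')=L(v')$ (the broadcast is successful). A lossy execution is a sequence $\gamma_0,\dots,\gamma_r$ of configurations with $\gamma_0$ initial and consecutive lossy steps (so node set and edges are fixed). *)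

(* Defs.v *)
From mathcomp Require Import all_boot.
Set Implicit Arguments. Unset Strict Implicit. Unset Printing Implicit Defensive.

Inductive action (M : Type) := Bcast of M | Recv of M.
Arguments Bcast {M} _.
Arguments Recv {M} _.

Definition trans_rel (Q M : Type) := Q -> action M -> Q -> Prop.

Definition complete_receptions (Q M : Type) (Delta : trans_rel Q M) :=
  forall (q : Q) (m : M), exists q', Delta q (Recv m) q'.

(* Nodes and edges are
   fixed along an execution, so an execution is a sequence of labellings. *)
Definition graph (V : finType) (E : rel V) := symmetric E /\ irreflexive E.

(* One annotated step of an execution: the broadcasting node, the message,
   whether the broadcast is successful (true) or lost (false), and the
   labelling after the step. *)
Record step (V Q M : Type) := Step {
  bnode : V; bmsg : M; bsucc : bool; post : V -> Q }.

Definition lossy_step (Q M : Type) (Delta : trans_rel Q M) (V : finType)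
    (E : rel V) (L : V -> Q) (v : V) (m : M) (succ : bool) (L' : V -> Q) :=
  Delta (L v) (Bcast m) (L' v) /\
  if succ then
    (forall v', v' != v ->
       (E v v' -> Delta (L v') (Recv m) (L' v')) /\ (~~ E v v' -> L' v' = L v'))
  else (forall v', v' != v -> L' v' = L v').

Fixpoint steps_from (Q M : Type) (Delta : trans_rel Q M) (V : finType)
    (E : rel V) (L : V -> Q) (s : seq (step V Q M)) : Prop :=
  match s with
  | [::] => True
  | st :: s' => lossy_step Delta E L (bnode st) (bmsg st) (bsucc st) (post st)
                /\ steps_from Delta E (post st) s'
  end.

Definition lossy_execution (Q M : Type) (I : pred Q) (Delta : trans_rel Q M)
    (V : finType) (E : rel V) (L0 : V -> Q) (s : seq (step V Q M)) : Prop :=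
  (forall v, I (L0 v)) /\ steps_from Delta E L0 s.

Definition final (V Q M : Type) (L0 : V -> Q) (s : seq (step V Q M)) : V -> Q :=
  last L0 [seq post st | st <- s].

Definition nb_broadcasts (V : finType) (Q M : Type) (v : V)
    (s : seq (step V Q M)) : nat :=
  count (fun st => bnode st == v) s.

Definition has_successful_broadcast (V : finType) (Q M : Type) (v : V)
    (s : seq (step V Q M)) : bool :=
  has (fun st => (bnode st == v) && bsucc st) s.

(* Main.v *)
Require Import Defs.
From mathcomp Require Import all_boot.
Set Implicit Arguments. Unset Strict Implicit.

Definition mixl (V Q : Type) (L : V -> Q) (x : Q) (o : option V) : Q :=
  match o with Some v => L v | None => x end.

Definition Ext (V : finType) (E : rel V) (vq : V) : rel (option V) :=
  fun o1 o2 => match o1, o2 with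
  | Some a, Some b => E a b
  | None, Some b => E vq b
  | Some a, None => E vq a
  | None, None => false end.

Definition tr (V : finType) (Q M : Type) (vq : V) (L : V -> Q) (st : step V Q M)
  : seq (step (option V) Q M) :=
  if bnode st == vq then
    [:: @Step (option V) Q M (Some vq) (bmsg st) (bsucc st) (mixl (post st) (L vq));
        @Step (option V) Q M None (bmsg st) false (mixl (post st) (post st vq))]
  else [:: @Step (option V) Q M (Some (bnode st)) (bmsg st) (bsucc st) (mixl (post st) (post st vq))].

Fixpoint trs (V : finType) (Q M : Type) (vq : V) (L : V -> Q) (s : seq (step V Q M))
  : seq (step (option V) Q M) :=
  match s with
  | [::] => [::]
  | st :: s' => tr vq L st ++ trs vq (post st) s'
  end.

Lemma trs_ok (Q M : finType) (Delta : trans_rel Q M) (V : finType) (E : rel V)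
  (HE : graph E) (vq : V) (s : seq (step V Q M)) : forall (L : V -> Q),
  steps_from Delta E L s ->
  [/\ steps_from Delta (Ext E vq) (mixl L (L vq)) (trs vq L s),
      last (mixl L (L vq)) [seq post st | st <- trs vq L s] =
        mixl (last L [seq post st | st <- s]) (last L [seq post st | st <- s] vq),
      nb_broadcasts None (trs vq L s) = nb_broadcasts vq s &
      ~~ has_successful_broadcast None (trs vq L s)].
Proof.
case: HE => Hsym Hirr.
elim: s => [|st s IH] L /=; first by [].
case=> [[Hb Hst] Hrest].
have [IH1 IH2 IH3 IH4] := IH _ Hrest.
rewrite /tr /nb_broadcasts /has_successful_broadcast.
case: st Hb Hst Hrest IH1 IH2 IH3 IH4 => u m b L' /= Hb Hst Hrest IH1 IH2 IH3 IH4.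
case: (eqVneq u vq) => [Huv|Huv] /=.
- subst u; split => //.
  + split; [split => //|split; [split => //|exact IH1]].
    * case: b Hst => Hst [w|] //= Hw.
      - have Hw' : w != vq by apply: contraNneq Hw => ->.
        exact: Hst.
      - by split => //; rewrite /Ext Hirr.
      - have Hw' : w != vq by apply: contraNneq Hw => ->.
        exact: Hst.
    * by case.
  + by rewrite /nb_broadcasts in IH3; rewrite IH3.
- split => //.
  + split; [split => //|exact IH1].
    case: b Hst => Hst [w|] //= Hw.
    * have Hw' : w != u by apply: contraNneq Hw => ->.
      exact: Hst.
    * have Hvu : vq != u by rewrite eq_sym.
      by rewrite /Ext Hsym; apply: Hst.
    * have Hw' : w != u by apply: contraNneq Hw => ->.
      exact: Hst.
    * by apply: Hst; rewrite eq_sym.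
Qed.

Theorem proposition3p6
  (Q M : finType) (I : pred Q) (Delta : trans_rel Q M)
  (Hcomplete : complete_receptions Delta)
  (V : finType) (E : rel V) (HE : graph E)
  (L0 : V -> Q) (s : seq (step V Q M))
  (Hexec : lossy_execution I Delta E L0 s)
  (q : Q) (Hq : q \in [seq final L0 s v | v : V])
  (vq : V) (Hvq : final L0 s vq = q) :
  exists (V' : finType) (E' : rel V') (L0' : V' -> Q) (s' : seq (step V' Q M))
         (iota : V -> V') (vnew : V'),
    graph E' /\ lossy_execution I Delta E' L0' s' /\
    #|V'| = #|V|.+1 /\
    injective iota /\
    (forall v, final L0' s' (iota v) = final L0 s v) /\
    (forall v, iota v != vnew) /\
    final L0' s' vnew = q /\
    (forall v, E' vnew (iota v) = E vq v) /\
    nb_broadcasts vnew s' = nb_broadcasts vq s /\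
    ~~ has_successful_broadcast vnew s'.
Proof.
case: Hexec => HI Hs.
have [H1 H2 H3 H4] := trs_ok HE vq Hs.
exists (option V), (Ext E vq), (mixl L0 (L0 vq)), (trs vq L0 s), Some, None.
case: (HE) => Hsym Hirr.
split.
  split; first by case=> [a|] [b|] //=; rewrite /Ext Hsym.
  by case=> [a|] //=; rewrite /Ext Hirr.
split; first by split => // -[a|] /=.
split; first by rewrite card_option.
split; first by move=> a b [].
split; first by move=> v; rewrite /final H2.
split; first by [].
split; first by rewrite /final H2.
by [].
Qed.
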